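(* Let $L$ be a positive integer and let $\Lambda$ be a subgroup of $\mathbb{Z}_L^2$. Then there exist unique integers $a,b$ with $a\mid L$, $b\mid L$, and a unique integer $s$ with $0\le s<b$ and $s\in\frac{ab}{\gcd(ab,L)}\mathbb{Z}$, such that $$\Lambda = A\mathbb{Z}_L^2=\begin{pmatrix} a & 0\\ s & b\end{pmatrix}\mathbb{Z}_L^2 .$$
   Context: $\mathbb{Z}_L=\mathbb{Z}/L\mathbb{Z}$. For an integer matrix $A$, $A\mathbb{Z}_L^2=\{Az \bmod L : z\in\mathbb{Z}_L^2\}$ denotes the image of $\mathbb{Z}_L^2$ under multiplication by $A$ with arithmetic modulo $L$. *)

(* Defs.v *)
From HB Require Import structures.
From mathcomp Require Import all_boot all_order all_algebra.
Set Implicit Arguments. Unset Strict Implicit. Unset Printing Implicit Defensive.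
Import GRing.Theory.
Local Open Scope ring_scope.

(* Z_L is modelled by the ordinal type 'I_L with L = n.+1 (its canonical
   additive group is Z/LZ, valid also for L = 1).  Z_L^2 is 'I_L * 'I_L. *)
Notation ZL2 L := ('I_L * 'I_L)%type.

Definition is_subgroup (n : nat) (Lam : {set ZL2 n.+1}) : Prop :=
  zmod_closed [in Lam].

(* The image [a 0; s b] Z_L^2 = { (a x, s x + b y) mod L : x, y in Z_L }. *)
Definition lower_tri_image (n : nat) (a s b : nat) : {set ZL2 n.+1} :=
  [set (x *+ a, x *+ s + y *+ b) | x : 'I_n.+1, y : 'I_n.+1].

Definition HNF_params (L a b s : nat) : Prop :=
  [/\ (a %| L)%N, (b %| L)%N, (s < b)%N & ((a * b) %/ gcdn (a * b) L %| s)%N].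

(* Main.v *)
Require Import Defs.
From HB Require Import structures.
From mathcomp Require Import all_boot all_order all_algebra.
From mathcomp Require Import zify.
Import GRing.Theory.

Definition R n (Lam : {set ZL2 n.+1}) (u v : nat) : bool :=
  ((inZp u : 'I_n.+1), (inZp v : 'I_n.+1)) \in Lam.

Arguments R {n} Lam u v.

Lemma inZp_mod n u w : u = w %[mod n.+1] -> inZp u = inZp w :> 'I_n.+1.
Proof. by move=> h; apply: val_inj => /=. Qed.
Arguments inZp_mod {n u w}.

Lemma inZp_modE n u w : inZp u = inZp w :> 'I_n.+1 -> u = w %[mod n.+1].
Proof. by move/(congr1 val). Qed.

Lemma inZpD n u v : inZp (u + v) = (inZp u + inZp v)%R :> 'I_n.+1.
Proof. by apply: val_inj => /=; rewrite modnDm. Qed.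

Lemma inZp0 n : inZp 0 = 0%R :> 'I_n.+1.
Proof. by apply: val_inj => /=; rewrite mod0n. Qed.

Lemma mulrn_inZp n x k : ((inZp x : 'I_n.+1) *+ k)%R = inZp (x * k).
Proof. by rewrite Zp_mulrn; apply: val_inj => /=; rewrite modnMml. Qed.

Lemma ord_mulrn n (x : 'I_n.+1) k : (x *+ k)%R = inZp (x * k).
Proof. by rewrite -{1}(valZpK x) mulrn_inZp. Qed.

Lemma dvd_modeq d L u w : d %| L -> u = w %[mod L] -> (d %| u) = (d %| w).
Proof.
move=> dL e; rewrite (divn_eq u L) (divn_eq w L) e !dvdn_addr //;
  exact: dvdn_mull.
Qed.

Arguments dvd_modeq {d L u w}.

Lemma nt a b c s : 0 < a -> 0 < b ->
  (a * b %/ gcdn (a * b) (a * c) %| s) = (b %| c * s).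
Proof.
move=> a0 b0; rewrite -muln_gcdr divnMl //.
move Hg: (gcdn b c) => g.
have g0 : 0 < g by rewrite -Hg gcdn_gt0 b0.
have hb : b = b %/ g * g by rewrite divnK // -Hg dvdn_gcdl.
have hc : c = c %/ g * g by rewrite divnK // -Hg dvdn_gcdr.
have cop : coprime (b %/ g) (c %/ g).
  have : gcdn (b %/ g) (c %/ g) * g = 1 * g by rewrite muln_gcdl -hb -hc Hg mul1n.
  by move/eqP; rewrite eqn_pmul2r.
by rewrite {2}hb {1}hc mulnAC dvdn_pmul2r // Gauss_dvdr.
Qed.

Section Main.
Variables (n : nat) (Lam : {set ZL2 n.+1}).
Hypothesis hL : is_subgroup Lam.

Lemma R00 : R Lam 0 0.
Proof. by case: hL => h0 _; rewrite /R inZp0. Qed.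

Lemma RD {u v u' v'} : R Lam u v -> R Lam u' v' -> R Lam (u + u') (v + v').
Proof.
case: hL => h0 hs hp hq; rewrite /R !inZpD.
have := hs _ _ hp (hs _ _ h0 hq).
by rewrite GRing.sub0r GRing.opprK.
Qed.

Lemma RM k {u v} : R Lam u v -> R Lam (k * u) (k * v).
Proof.
move=> h; elim: k => [|k IH]; first by rewrite !mul0n R00.
by rewrite !mulSn; apply: RD.
Qed.

Lemma Rmod {u v u' v'} : u = u' %[mod n.+1] -> v = v' %[mod n.+1] ->
  R Lam u v -> R Lam u' v'.
Proof. by move=> hu hv; rewrite /R (inZp_mod hu) (inZp_mod hv). Qed.


Lemma Rex {k V} : R Lam k V -> [exists w : 'I_n.+1, R Lam k w].
Proof.
move=> h; apply/existsP; exists (inZp V); apply: Rmod h => //=.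
by rewrite modn_mod.
Qed.

Lemma RL0 : R Lam n.+1 0.
Proof. by apply: Rmod R00 => //; rewrite modnn mod0n. Qed.

Lemma R0L : R Lam 0 n.+1.
Proof. by apply: Rmod R00 => //; rewrite modnn mod0n. Qed.

Lemma main : exists a b s : nat,
    [/\ HNF_params n.+1 a b s, Lam = lower_tri_image n a s b &
        forall a' b' s' : nat,
          HNF_params n.+1 a' b' s' -> Lam = lower_tri_image n a' s' b' ->
          [/\ a' = a, b' = b & s' = s]].
Proof.
have exA : exists k, (0 < k) && [exists w : 'I_n.+1, R Lam k w].
  by exists n.+1; rewrite ltn0Sn; apply: Rex RL0.
case: (ex_minnP exA) => a /andP[a0 /existsP[t Rat]] mina.
have exB : exists k, (0 < k) && R Lam 0 k.
  by exists n.+1; rewrite ltn0Sn R0L.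
case: (ex_minnP exB) => b /andP[b0 Rb] minb.
have divA : forall u v, R Lam u v -> a %| u.
  move=> u v h.
  have h2 := RD h (RM (n * (u %/ a)) Rat).
  have h3 : R Lam (u %% a) (v + n * (u %/ a) * t).
    apply: Rmod h2 => //.
    have -> : u + n * (u %/ a) * a = (u %/ a * a) * n.+1 + u %% a.
      by rewrite {1}(divn_eq u a); move: (u %/ a) (u %% a) => q r; nia.
    by rewrite modnMDl.
  rewrite /dvdn; apply/negPn/negP => hr.
  have : a <= u %% a by apply: mina; rewrite lt0n hr; apply: Rex h3.
  by rewrite leqNgt ltn_pmod.
have divB : forall v, R Lam 0 v -> b %| v.
  move=> v h.
  have h2 := RD h (RM (n * (v %/ b)) Rb).
  have h3 : R Lam 0 (v %% b).
    apply: Rmod h2; first by rewrite muln0.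
    have -> : v + n * (v %/ b) * b = (v %/ b * b) * n.+1 + v %% b.
      by rewrite {1}(divn_eq v b); move: (v %/ b) (v %% b) => q r; nia.
    by rewrite modnMDl.
  rewrite /dvdn; apply/negPn/negP => hr.
  have : b <= v %% b by apply: minb; rewrite lt0n hr h3.
  by rewrite leqNgt ltn_pmod.
have aL : a %| n.+1 := divA _ _ RL0.
have bL : b %| n.+1 := divB _ R0L.
pose s := t %% b.
have Ras : R Lam a s.
  have h2 := RD Rat (RM (n * (t %/ b)) Rb).
  apply: Rmod h2; first by rewrite muln0 addn0.
  have -> : t + n * (t %/ b) * b = (t %/ b * b) * n.+1 + t %% b.
    by rewrite {1}(divn_eq t b); move: (t %/ b) (t %% b) => q r; nia.
  by rewrite modnMDl.
have Dfact : forall v, R Lam a v -> b %| v + n * s.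
  move=> v hv; apply: (divB).
  have h := RD hv (RM n Ras).
  apply: Rmod h => //.
  have -> : a + n * a = a * n.+1 by nia.
  by rewrite modnMl mod0n.
pose c := n.+1 %/ a.
have Lc : n.+1 = a * c by rewrite mulnC divnK.
have cond : (a * b %/ gcdn (a * b) n.+1 %| s).
  rewrite Lc nt //; apply: (divB).
  have h := RM c Ras; apply: Rmod h => //.
  by rewrite mulnC -Lc modnn mod0n.
have sb : s < b by rewrite ltn_pmod.
exists a, b, s; split.
- by split.
- apply/setP => p; apply/idP/idP.
  + case: p => x y hp.
    have h : R Lam x y by rewrite /R !valZpK.
    have [q hq] := dvdnP (divA _ _ h).
    have h2 := RD h (RM (n * q) Ras).
    have h3 : R Lam 0 (y + n * q * s).
      apply: Rmod h2 => //.
      have -> : x + n * q * a = (q * a) * n.+1 by rewrite hq; nia.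
      by rewrite modnMl mod0n.
    have [r hr] := dvdnP (divB _ h3).
    apply/imset2P; exists (inZp q) (inZp r); rewrite ?inE //.
    rewrite !mulrn_inZp -inZpD; congr pair.
      by rewrite -(valZpK x); apply: inZp_mod; rewrite hq.
    rewrite -(valZpK y); apply: inZp_mod.
    have -> : q * s + r * b = (q * s) * n.+1 + y by rewrite -hr; nia.
    by rewrite modnMDl.
  + case/imset2P => x y _ _ ->.
    rewrite !ord_mulrn -inZpD.
    have := RD (RM x Ras) (RM y Rb); rewrite muln0 addn0; exact.
move=> a' b' s' [a'L b'L s'b hc] hLam.
have Rimg : forall u v, R Lam u v ->
    exists x y, u = x * a' %[mod n.+1] /\ v = x * s' + y * b' %[mod n.+1].
  move=> u v; rewrite /R hLam => /imset2P[x y _ _ e].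
  have /= e1 := congr1 fst e; have /= e2 := congr1 snd e.
  rewrite ord_mulrn in e1; rewrite !ord_mulrn -inZpD in e2.
  by exists x, y; split; apply: inZp_modE.
have imgR : forall x y, R Lam (x * a') (x * s' + y * b').
  move=> x y; rewrite /R hLam; apply/imset2P; exists (inZp x) (inZp y);
    rewrite ?inE //.
  by rewrite !mulrn_inZp inZpD.
have ea : a' = a.
  have h1 : a %| a' by have := divA _ _ (imgR 1 0); rewrite mul1n.
  have [x [y [e1 _]]] := Rimg _ _ Rat.
  have h2 : a' %| a by rewrite (dvd_modeq a'L e1) dvdn_mull.
  by apply/eqP; rewrite eqn_dvd h1 h2.
subst a'.
have b'0 : 0 < b' by apply: leq_ltn_trans s'b.
have eb : b' = b.
  have h1 : b %| b'.
    by have := divB _ (imgR 0 1); rewrite mul0n mul1n add0n.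
  have [x [y [e1 e2]]] := Rimg _ _ Rb.
  have hx : n.+1 %| x * a by rewrite /dvdn -e1 mod0n.
  have cx : c %| x by rewrite -(dvdn_pmul2r a0) [c * a]mulnC -Lc.
  have hcs : b' %| c * s' by move: hc; rewrite Lc nt.
  have hxs : b' %| x * s'.
    by have [k ->] := dvdnP cx; rewrite -mulnA dvdn_mull.
  have h2 : b' %| b.
    by rewrite (dvd_modeq b'L e2) dvdn_addr // dvdn_mull.
  by apply/eqP; rewrite eqn_dvd h1 h2.
subst b'.
have es : s' = s.
  have := imgR 1 0; rewrite !mul1n mul0n addn0 => /Dfact h.
  have [c' hc'] := dvdnP bL.
  have [k hk] := dvdnP h.
  have e : s' + n.+1 * s = (c' * s) * b + s' by rewrite hc' addnC mulnAC.
  have e' : s' + n.+1 * s = k * b + s by rewrite mulSn addnCA hk addnC.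
  have := congr1 (modn^~ b) e; rewrite e' !modnMDl.
  by rewrite !modn_small.
by split.
Qed.
End Main.

Theorem proposition2p1 (n : nat) (Lam : {set ('I_n.+1 * 'I_n.+1)%type}) :
  is_subgroup Lam ->
  exists a b s : nat,
    [/\ HNF_params n.+1 a b s, Lam = lower_tri_image n a s b &
        forall a' b' s' : nat,
          HNF_params n.+1 a' b' s' -> Lam = lower_tri_image n a' s' b' ->
          [/\ a' = a, b' = b & s' = s]].
Proof. exact: main. Qed.
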